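(* Fix $\lambda\in[0,1)$ and $p\in[0,1]$, and denote by $\mathbf{v}(\mathbf{v}^0,\cdot)$ the unique solution to the fluid model with initial condition $\mathbf{v}^0\in\overline{\mathcal{V}}^\infty$. If $\mathbf{w}^n\in\overline{\mathcal{V}}^\infty$ for all $n$ and $\|\mathbf{w}^n-\mathbf{v}^0\|_w\to0$ as $n\to\infty$, then for all $t\ge0$, $\lim_{n\to\infty}\|\mathbf{v}(\mathbf{w}^n,t)-\mathbf{v}(\mathbf{v}^0,t)\|_w=0$.
   Context: $\mathcal{S}=\{\mathbf{s}\in[0,1]^{\mathbb{Z}_+}:1=\mathbf{s}_0\ge\mathbf{s}_1\ge\cdots\ge0\}$, $\overline{\mathcal{S}}^\infty=\{\mathbf{s}\in\mathcal{S}:\sum_{i\ge1}\mathbf{s}_i<\infty\}$, $\overline{\mathcal{V}}^\infty=\{\mathbf{v}:\mathbf{v}_i=\sum_{j\ge i}\mathbf{s}_j\ \forall i,\text{ for some }\mathbf{s}\in\overline{\mathcal{S}}^\infty\}$; $\|\mathbf{x}\|_w^2=\sum_{i\ge0}2^{-i}\mathbf{x}_i^2$. $g_i(\mathbf{v})=p$ if $\mathbf{v}_i>0$, $=\min\{\lambda\mathbf{v}_{i-1},p\}$ if $\mathbf{v}_i=0<\mathbf{v}_{i-1}$, $=0$ if $\mathbf{v}_i=\mathbf{v}_{i-1}=0$. A solution to the fluid model with initial condition $\mathbf{v}^0$ is $\mathbf{v}:[0,\infty)\to\overline{\mathcal{V}}^\infty$ with (0) all coordinates $L$-Lipschitz for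 a common $L$; (1) $\mathbf{v}(0)=\mathbf{v}^0$; (2) for all $t$, $\mathbf{v}_0-\mathbf{v}_1=1$ and $1\ge\mathbf{v}_i-\mathbf{v}_{i+1}\ge\mathbf{v}_{i+1}-\mathbf{v}_{i+2}\ge0$, $i\ge0$; (3) for a.e. $t$ and all $i\ge1$, $\dot{\mathbf{v}}_i=\lambda(\mathbf{v}_{i-1}-\mathbf{v}_i)-(1-p)(\mathbf{v}_i-\mathbf{v}_{i+1})-g_i(\mathbf{v})$. It exists and is unique. *)

(* Defs.v *)
From Stdlib Require Import Reals.
From Coquelicot Require Import Coquelicot.
Open Scope R_scope.

Definition in_S (s : nat -> R) : Prop :=
  s 0%nat = 1 /\ (forall i : nat, 0 <= s (S i) <= s i).

Definition in_Sbar (s : nat -> R) : Prop :=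
  in_S s /\ ex_series (fun i => s (S i)).

Definition in_Vbar (v : nat -> R) : Prop :=
  exists s : nat -> R, in_Sbar s /\
    forall i : nat, v i = Series (fun j => s (i + j)%nat).

Definition wnorm (x : nat -> R) : R :=
  sqrt (Series (fun i => (/ 2) ^ i * (x i) ^ 2)).

(* g_i(v) for i >= 1 *)
Definition g (lam p : R) (v : nat -> R) (i : nat) : R :=
  if Rlt_dec 0 (v i) then p
  else if Rlt_dec 0 (v (pred i)) then Rmin (lam * v (pred i)) p
  else 0.

Definition null_set (N : R -> Prop) : Prop :=
  forall eps : R, 0 < eps ->
    exists a b : nat -> R,
      (forall n, a n <= b n) /\
      (forall t, N t -> exists n, a n < t < b n) /\
      (forall m, sum_f_R0 (fun n => b n - a n) m <= eps).

(* A solution of the fluid model on [0, oo) with initial condition v0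
   (values of v at negative times are irrelevant). *)
Definition fluid_solution (lam p : R) (v0 : nat -> R) (v : R -> nat -> R) : Prop :=
  (forall t, 0 <= t -> in_Vbar (v t)) /\
  (exists L : R, forall (i : nat) (t1 t2 : R), 0 <= t1 -> 0 <= t2 ->
      Rabs (v t1 i - v t2 i) <= L * Rabs (t1 - t2)) /\
  (forall i, v 0 i = v0 i) /\
  (forall t, 0 <= t ->
      v t 0%nat - v t 1%nat = 1 /\
      forall i : nat,
        1 >= v t i - v t (S i) /\
        v t i - v t (S i) >= v t (S i) - v t (S (S i)) /\
        v t (S i) - v t (S (S i)) >= 0) /\
  (exists N : R -> Prop, null_set N /\
     forall t, 0 < t -> ~ N t ->
       forall i : nat, (1 <= i)%nat ->
         is_derive (fun s => v s i) t
           (lam * (v t (pred i) - v t i) - (1 - p) * (v t i - v t (S i))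
            - g lam p (v t) i)).

(* Main.v *)
Require Import Defs.
From Stdlib Require Import Reals Lra Lia Arith.
From Coquelicot Require Import Coquelicot.
Open Scope R_scope.

Lemma le_eps (x y : R) : (forall e, 0 < e -> x <= y + e) -> x <= y.
Proof.
  intros H. destruct (Rle_dec x y) as [h|h]; auto.
  specialize (H ((x - y)/2) ltac:(lra)). lra.
Qed.

Lemma cover_fun (a b : nat -> R) (eta : R) :
  (forall n, a n <= b n) -> (forall m, sum_f_R0 (fun n => b n - a n) m <= eta) ->
  exists Phi : R -> R, (forall t, 0 <= Phi t <= eta) /\
    (forall s t, t <= s -> Phi t <= Phi s) /\
    (forall n t s, a n < t -> t <= s -> s <= b n -> s - t <= Phi s - Phi t).
Proof.
  intros Hab Hsum.
  set (l := fun n t => Rmax 0 (Rmin t (b n) - a n)).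
  set (P := fun m t => sum_f_R0 (fun n => l n t) m).
  assert (Hl0 : forall n t, 0 <= l n t) by (intros; unfold l; apply Rmax_l).
  assert (Hlb : forall n t, l n t <= b n - a n).
  { intros n t; unfold l. specialize (Hab n). apply Rmax_lub; try lra.
    pose proof (Rmin_r t (b n)); lra. }
  assert (Hlmono : forall n t s, t <= s -> l n t <= l n s).
  { intros n t s hts; unfold l. apply Rle_max_compat_l.
    assert (Rmin t (b n) <= Rmin s (b n)).
    { unfold Rmin; destruct (Rle_dec t (b n)); destruct (Rle_dec s (b n)); lra. } lra. }
  assert (Hlin : forall n t s, a n < t -> t <= s -> s <= b n -> l n s - l n t = s - t).
  { intros n t s h1 h2 h3; unfold l. rewrite (Rmin_left t), (Rmin_left s) by lra.
    rewrite !Rmax_right by lra. lra. }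
  assert (HPb : forall m t, P m t <= eta).
  { intros m t. apply Rle_trans with (2 := Hsum m). unfold P.
    apply sum_Rle. intros; apply Hlb. }
  assert (HPm : forall m m' t, (m <= m')%nat -> P m t <= P m' t).
  { intros m m' t hm. induction hm. lra. simpl. pose proof (Hl0 (S m0) t). unfold P in *; simpl. lra. }
  assert (HPmono : forall m t s, t <= s -> P m t <= P m s).
  { intros m t s hts. unfold P. apply sum_Rle. intros; apply Hlmono; auto. }
  assert (HPlin : forall m n t s, (n <= m)%nat -> a n < t -> t <= s -> s <= b n ->
             P m t + (s - t) <= P m s).
  { intros m n t s hnm h1 h2 h3. induction hnm.
    - destruct n. unfold P; simpl. rewrite <- (Hlin O t s) by auto. lra.
      unfold P; simpl. rewrite <- (Hlin (S n) t s) by auto.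
      pose proof (HPmono n t s h2). unfold P in H. lra.
    - unfold P in *; simpl. pose proof (Hlmono (S m) t s h2). lra. }
  assert (Hc : forall t, {m | is_lub (fun y => exists k, y = P k t) m}).
  { intros t. apply completeness.
    - exists eta. intros y [k ->]. apply HPb.
    - exists (P O t). eauto. }
  exists (fun t => proj1_sig (Hc t)). split; [|split].
  - intros t. destruct (Hc t) as [m [Hu Hl]]; simpl. split.
    + apply Rle_trans with (P O t). unfold P; simpl; apply Hl0. apply Hu. eauto.
    + apply Hl. intros y [k ->]. apply HPb.
  - intros s t hts. destruct (Hc t) as [m [Hu Hl]]; destruct (Hc s) as [m' [Hu' Hl']]; simpl.
    apply Hl. intros y [k ->]. apply Rle_trans with (P k s). now apply HPmono. apply Hu'. eauto.
  - intros n t s h1 h2 h3. destruct (Hc t) as [m [Hu Hl]]; destruct (Hc s) as [m' [Hu' Hl']]; simpl.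
    assert (m <= m' - (s - t)); [|lra].
    apply Hl. intros y [k ->].
    destruct (Compare_dec.le_dec n k) as [hk|hk].
    + pose proof (HPlin k n t s hk h1 h2 h3). assert (P k s <= m') by (apply Hu'; eauto). lra.
    + assert (k <= n)%nat by lia. pose proof (HPm k n t H).
      pose proof (HPlin n n t s (le_n n) h1 h2 h3). assert (P n s <= m') by (apply Hu'; eauto). lra.
Qed.

Lemma mono_core (f : R -> R) (a b L : R) (N : R -> Prop) :
  a <= b -> 0 <= L ->
  (forall s t, a <= s <= b -> a <= t <= b -> Rabs (f s - f t) <= L * Rabs (s - t)) ->
  null_set N ->
  (forall t, a <= t < b -> ~ N t -> exists d, is_derive f t d /\ d <= 0) ->
  f b <= f a.
Proof.
  intros hab hL Hlip HN Hder.
  assert (Hlip' : forall s t, a <= t <= s -> s <= b -> f s - f t <= L * (s - t)).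
  { intros s t h1 h2. specialize (Hlip s t ltac:(lra) ltac:(lra)).
    rewrite (Rabs_right (s - t)) in Hlip by lra. pose proof (Rle_abs (f s - f t)). lra. }
  assert (Key : forall eps eta, 0 < eps -> 0 < eta -> f b <= f a + eps * (b - a) + L * eta).
  2:{ apply le_eps. intros e he.
      specialize (Key (e / (2 * (b - a + 1))) (e / (2 * (L + 1)))).
      assert (h1 : 0 < e / (2 * (b - a + 1))) by (apply Rdiv_lt_0_compat; lra).
      assert (h2 : 0 < e / (2 * (L + 1))) by (apply Rdiv_lt_0_compat; lra).
      specialize (Key h1 h2).
      assert (e / (2 * (b - a + 1)) * (b - a) <= e / 2).
      { unfold Rdiv. replace (e * / (2 * (b - a + 1)) * (b - a)) with ((e/2) * ((b-a) / (b - a + 1))) by (field; lra).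
        assert ((b - a) / (b - a + 1) <= 1). { apply Rmult_le_reg_r with (b - a + 1). lra. unfold Rdiv. rewrite Rmult_assoc, Rinv_l by lra. lra. }
        nra. }
      assert (L * (e / (2 * (L + 1))) <= e / 2).
      { replace (L * (e / (2 * (L + 1)))) with ((e/2) * (L / (L + 1))) by (field; lra).
        assert (L / (L + 1) <= 1). { apply Rmult_le_reg_r with (L + 1). lra. unfold Rdiv. rewrite Rmult_assoc, Rinv_l by lra. lra. }
        nra. }
      lra. }
  intros eps eta he heta.
  destruct (HN eta heta) as [an [bn [Hab [Hcov Hsum]]]].
  destruct (cover_fun an bn eta Hab Hsum) as [Phi [HP1 [HP2 HP3]]].
  set (h := fun t => f t - eps * t - L * Phi t).
  assert (Hloc : forall c, a <= c < b -> exists del, 0 < del /\ forall s, c <= s <= c + del -> h s <= h c).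
  { intros c hc. destruct (Classical_Prop.classic (N c)) as [Nc|Nc].
    - destruct (Hcov c Nc) as [n [h1 h2]].
      exists (Rmin (bn n - c) (b - c)). split. apply Rmin_glb_lt; lra.
      intros s hs. pose proof (Rmin_l (bn n - c) (b - c)). pose proof (Rmin_r (bn n - c) (b - c)).
      pose proof (HP3 n c s h1 ltac:(lra) ltac:(lra)).
      pose proof (Hlip' s c ltac:(lra) ltac:(lra)). unfold h. nra.
    - destruct (Hder c hc Nc) as [d [Hd hd]].
      apply is_derive_Reals in Hd. destruct (Hd eps he) as [del Hdel].
      exists (del / 2). split. pose proof (cond_pos del); lra.
      intros s hs. destruct (Req_dec s c) as [->|hsc]. lra.
      assert (Hs := Hdel (s - c) ltac:(lra) ltac:(rewrite Rabs_right; pose proof (cond_pos del); lra)).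
      replace (c + (s - c)) with s in Hs by ring.
      apply Rabs_def2 in Hs. destruct Hs as [Hs _].
      assert (f s - f c <= eps * (s - c)).
      { assert ((f s - f c) / (s - c) <= eps) by lra.
        apply Rmult_le_reg_r with (/ (s - c)). apply Rinv_0_lt_compat; lra.
        rewrite Rmult_assoc, Rinv_r by lra. lra. }
      pose proof (HP2 s c ltac:(lra)). unfold h. nra. }
  set (A := fun t => a <= t <= b /\ forall s, a <= s <= t -> h s <= h a).
  assert (HA : {c | is_lub A c}).
  { apply completeness. exists b. intros t [ht _]; lra. exists a. split. lra. intros s hs. replace s with a by lra. lra. }
  destruct HA as [c [Hcu Hcl]].
  assert (Ha : A a) by (split; [lra| intros s hs; replace s with a by lra; lra]).
  assert (hc1 : a <= c) by (apply Hcu; auto).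
  assert (hc2 : c <= b) by (apply Hcl; intros t [ht _]; lra).
  assert (C2 : forall s, a <= s < c -> h s <= h a).
  { intros s hs. destruct (Rle_dec (h s) (h a)) as [ok|nok]; auto. exfalso.
    assert (c <= s); [|lra]. apply Hcl. intros t [ht Ht].
    destruct (Rle_dec t s) as [|nt]; auto. exfalso. apply nok. apply Ht. lra. }
  assert (C3 : h c <= h a).
  { destruct (Req_dec c a) as [->|hca]. lra.
    apply le_eps. intros e he'.
    set (g := Rmin (e / (L + 1)) (c - a) / 2).
    assert (hg0 : 0 < g). { unfold g. apply Rdiv_lt_0_compat; try lra. apply Rmin_glb_lt; try lra. apply Rdiv_lt_0_compat; lra. }
    assert (hg1 : g < c - a). { unfold g. pose proof (Rmin_r (e / (L + 1)) (c - a)). lra. }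
    assert (hg2 : L * g <= e).
    { unfold g. pose proof (Rmin_l (e / (L + 1)) (c - a)).
      assert (L * (e / (L + 1)) <= e).
      { replace (L * (e / (L + 1))) with (e * (L / (L + 1))) by (field; lra).
        assert (L / (L + 1) <= 1). { apply Rmult_le_reg_r with (L + 1). lra. unfold Rdiv. rewrite Rmult_assoc, Rinv_l by lra. lra. }
        nra. }
      nra. }
    pose proof (C2 (c - g) ltac:(lra)).
    pose proof (Hlip' c (c - g) ltac:(lra) hc2).
    pose proof (HP2 c (c - g) ltac:(lra)).
    unfold h in *. nra. }
  assert (C4 : c = b).
  { destruct (Req_dec c b) as [|hcb]; auto. exfalso.
    destruct (Hloc c ltac:(lra)) as [del [hdel Hdel]].
    assert (A (Rmin b (c + del))).
    { split. split. pose proof (Rmin_glb b (c + del) c ltac:(lra) ltac:(lra)). lra. apply Rmin_l.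
      intros s hs. destruct (Rlt_dec s c). apply C2; lra.
      pose proof (Rmin_r b (c + del)). pose proof (Hdel s ltac:(lra)). lra. }
    pose proof (Hcu _ H). assert (c < Rmin b (c + del)) by (apply Rmin_glb_lt; lra). lra. }
  subst c. unfold h in C3.
  pose proof (HP1 a). pose proof (HP1 b). nra.
Qed.

Lemma mono_open (f : R -> R) (a b L : R) (N : R -> Prop) :
  a <= b -> 0 <= L ->
  (forall s t, a <= s <= b -> a <= t <= b -> Rabs (f s - f t) <= L * Rabs (s - t)) ->
  null_set N ->
  (forall t, a < t < b -> ~ N t -> exists d, is_derive f t d /\ d <= 0) ->
  f b <= f a.
Proof.
  intros hab hL Hlip HN Hder.
  destruct (Req_dec a b) as [->|hab']. lra.
  apply le_eps. intros e he.
  set (g := Rmin (e / (L + 1)) (b - a) / 2).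
  assert (hg0 : 0 < g). { unfold g. apply Rdiv_lt_0_compat; try lra. apply Rmin_glb_lt; try lra. apply Rdiv_lt_0_compat; lra. }
  assert (hg1 : g < b - a). { unfold g. pose proof (Rmin_r (e / (L + 1)) (b - a)). lra. }
  assert (hg2 : L * g <= e).
  { unfold g. pose proof (Rmin_l (e / (L + 1)) (b - a)).
    assert (L * (e / (L + 1)) <= e).
    { replace (L * (e / (L + 1))) with (e * (L / (L + 1))) by (field; lra).
      assert (L / (L + 1) <= 1). { apply Rmult_le_reg_r with (L + 1). lra. unfold Rdiv. rewrite Rmult_assoc, Rinv_l by lra. lra. }
      nra. }
    nra. }
  assert (f b <= f (a + g)).
  { apply mono_core with L N; auto; try lra.
    intros s t hs ht. apply Hlip; lra.
    intros t ht hN. apply Hder; auto; lra. }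
  pose proof (Hlip (a + g) a ltac:(lra) ltac:(lra)).
  replace (a + g - a) with g in H0 by ring. rewrite (Rabs_right g) in H0 by lra.
  pose proof (Rle_abs (f (a + g) - f a)). nra.
Qed.

Lemma even_2k k : Nat.even (2 * k) = true /\ Nat.even (S (2 * k)) = false /\
  Nat.div2 (2 * k) = k /\ Nat.div2 (S (2 * k)) = k.
Proof.
  rewrite Nat.even_succ, Nat.even_mul, Nat.odd_mul, Nat.div2_double, Nat.div2_succ_double. auto.
Qed.

Lemma null_union (N1 N2 : R -> Prop) : null_set N1 -> null_set N2 ->
  null_set (fun t => N1 t \/ N2 t).
Proof.
  intros H1 H2 eps he.
  destruct (H1 (eps/2) ltac:(lra)) as [a1 [b1 [h1 [c1 s1]]]].
  destruct (H2 (eps/2) ltac:(lra)) as [a2 [b2 [h2 [c2 s2]]]].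
  exists (fun n => if Nat.even n then a1 (Nat.div2 n) else a2 (Nat.div2 n)).
  exists (fun n => if Nat.even n then b1 (Nat.div2 n) else b2 (Nat.div2 n)).
  split; [|split].
  - intros n. destruct (Nat.even n); auto.
  - intros t [Ht|Ht].
    + destruct (c1 t Ht) as [n hn]. exists (2 * n)%nat. destruct (even_2k n) as [e1 [e2 [e3 e4]]].
      rewrite e1, e3. auto.
    + destruct (c2 t Ht) as [n hn]. exists (S (2 * n))%nat. destruct (even_2k n) as [e1 [e2 [e3 e4]]].
      rewrite e2, e4. auto.
  - set (c := fun n => (if Nat.even n then b1 (Nat.div2 n) else b2 (Nat.div2 n)) -
                       (if Nat.even n then a1 (Nat.div2 n) else a2 (Nat.div2 n))).
    assert (Hc0 : forall n, 0 <= c n).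
    { intros n; unfold c. destruct (Nat.even n). specialize (h1 (Nat.div2 n)); lra. specialize (h2 (Nat.div2 n)); lra. }
    assert (Hk : forall k, sum_f_R0 c (S (2 * k)) =
                 sum_f_R0 (fun n => b1 n - a1 n) k + sum_f_R0 (fun n => b2 n - a2 n) k).
    { induction k.
      - simpl. unfold c. simpl. ring.
      - replace (S (2 * S k)) with (S (S (S (2 * k)))) by lia.
        rewrite (tech5 c (S (S (2 * k)))), (tech5 c (S (2 * k))), IHk. unfold c.
        replace (S (S (S (2 * k)))) with (S (2 * S k)) by lia.
        replace (S (S (2 * k))) with (2 * S k)%nat by lia.
        destruct (even_2k (S k)) as [e1 [e2 [e3 e4]]]. rewrite e1, e2, e3, e4. simpl. ring. }
    intros m. fold c.
    assert (sum_f_R0 c m <= sum_f_R0 c (S (2 * m))).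
    { assert (forall j, sum_f_R0 c m <= sum_f_R0 c (m + j)).
      { induction j. rewrite Nat.add_0_r. lra. rewrite Nat.add_succ_r. simpl. pose proof (Hc0 (S (m + j))). lra. }
      replace (S (2 * m)) with (m + S m)%nat by lia. apply H. }
    rewrite Hk in H. specialize (s1 m). specialize (s2 m). lra.
Qed.

Lemma exp_lip (C s t : R) : 0 <= C -> 0 <= s -> 0 <= t ->
  Rabs (exp (- C * s) - exp (- C * t)) <= C * Rabs (s - t).
Proof.
  intros hC.
  assert (K : forall s t, 0 <= t <= s -> exp (- C * t) - exp (- C * s) <= C * (s - t) /\ 0 <= exp (- C * t) - exp (- C * s)).
  { intros x y hxy. replace (- C * x) with (- C * y + (- C * (x - y))) by ring.
    rewrite exp_plus. pose proof (exp_ineq1_le (- C * (x - y))).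
    assert (exp (- C * (x - y)) <= 1).
    { destruct (Req_dec (- C * (x - y)) 0) as [e|e]. rewrite e, exp_0; lra.
      left. rewrite <- exp_0. apply exp_increasing. nra. }
    assert (exp (- C * y) <= 1).
    { destruct (Req_dec (- C * y) 0) as [e|e]. rewrite e, exp_0; lra.
      left. rewrite <- exp_0. apply exp_increasing. nra. }
    pose proof (exp_pos (- C * y)). pose proof (exp_pos (- C * (x - y))). split; nra. }
  intros hs ht. destruct (Rle_dec t s).
  - destruct (K s t ltac:(lra)). rewrite Rabs_left1 by lra. rewrite Rabs_right by lra. lra.
  - destruct (K t s ltac:(lra)). rewrite Rabs_right by lra. rewrite Rabs_left1 by lra. lra.
Qed.

Lemma der_val (f : R -> R) x l l' : is_derive f x l -> l = l' -> is_derive f x l'.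
Proof. intros H <-; exact H. Qed.

Lemma gronwall (f : R -> R) (T Lf B C c : R) (N : R -> Prop) :
  0 <= T -> 0 < C -> 0 <= c -> 0 <= Lf ->
  (forall s t, 0 <= s <= T -> 0 <= t <= T -> Rabs (f s - f t) <= Lf * Rabs (s - t)) ->
  (forall t, 0 <= t <= T -> Rabs (f t) <= B) ->
  null_set N ->
  (forall t, 0 < t < T -> ~ N t -> exists d, is_derive f t d /\ d <= C * f t + c) ->
  f T <= exp (C * T) * (f 0 + c / C).
Proof.
  intros hT hC hc hLf Hlip Hb HN Hd.
  set (h := fun t => exp (- C * t) * (f t + c / C)).
  assert (hB : 0 <= B) by (specialize (Hb 0 ltac:(lra)); pose proof (Rabs_pos (f 0)); lra).
  assert (Hm : h T <= h 0).
  { apply mono_open with (L := C * (B + c / C) + Lf) (N := N); auto.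
    - assert (0 <= c / C) by (apply Rdiv_le_0_compat; lra). nra.
    - intros s t hs ht. unfold h.
      replace (exp (- C * s) * (f s + c / C) - exp (- C * t) * (f t + c / C)) with
        ((exp (- C * s) - exp (- C * t)) * (f s + c / C) + exp (- C * t) * (f s - f t)) by ring.
      eapply Rle_trans. apply Rabs_triang. rewrite !Rabs_mult.
      pose proof (exp_lip C s t ltac:(lra) ltac:(lra) ltac:(lra)).
      assert (Rabs (f s + c / C) <= B + c / C).
      { eapply Rle_trans. apply Rabs_triang. rewrite (Rabs_right (c / C)).
        pose proof (Hb s hs); lra. apply Rle_ge, Rdiv_le_0_compat; lra. }
      assert (Rabs (exp (- C * t)) <= 1).
      { rewrite Rabs_right by (left; apply exp_pos).
        destruct (Req_dec (- C * t) 0) as [e|e]. rewrite e, exp_0; lra.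
        left. rewrite <- exp_0. apply exp_increasing. nra. }
      pose proof (Hlip s t hs ht).
      pose proof (Rabs_pos (exp (- C * s) - exp (- C * t))).
      pose proof (Rabs_pos (f s + c / C)). pose proof (Rabs_pos (exp (- C * t))).
      pose proof (Rabs_pos (f s - f t)). pose proof (Rabs_pos (s - t)).
      assert (0 <= c / C) by (apply Rdiv_le_0_compat; lra).
      apply Rle_trans with (C * Rabs (s - t) * (B + c / C) + 1 * (Lf * Rabs (s - t))).
      apply Rplus_le_compat; apply Rmult_le_compat; auto. nra.
    - intros t ht hN. destruct (Hd t ht hN) as [d [Hd1 Hd2]].
      assert (He : is_derive (fun x => exp (- C * x)) t (- C * exp (- C * t))).
      { assert (H1 : is_derive (fun x => - C * x) t (- C)).
        { pose proof (is_derive_scal (fun x => x) t (- C) 1 (is_derive_id t)) as H0.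
          rewrite Rmult_1_r in H0. exact H0. }
        exact (is_derive_comp exp (fun x => - C * x) t (exp (- C * t)) (- C) (is_derive_exp _) H1). }
      assert (Hf : is_derive (fun x => f x + c / C) t d).
      { apply der_val with (plus d zero). apply (is_derive_plus f (fun _ => c / C)); auto. apply is_derive_const.
        apply plus_zero_r. }
      exists (- C * exp (- C * t) * (f t + c / C) + exp (- C * t) * d). split.
      + pose proof (is_derive_mult _ _ t _ _ He Hf) as H. simpl in H. apply H. intros; apply Rmult_comm.
      + pose proof (exp_pos (- C * t)).
        replace (- C * exp (- C * t) * (f t + c / C) + exp (- C * t) * d) with
          (exp (- C * t) * (d - C * f t - c)) by (field; lra). nra. }
  unfold h in Hm. rewrite Rmult_0_r, exp_0, Rmult_1_l in Hm.
  assert (0 <= c / C) by (apply Rdiv_le_0_compat; lra).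
  assert (E : exp (C * T) * exp (- C * T) = 1). { rewrite <- exp_plus. replace (C * T + - C * T) with 0 by ring. apply exp_0. }
  pose proof (exp_pos (C * T)).
  apply Rmult_le_compat_l with (r := exp (C * T)) in Hm; [|lra].
  rewrite <- Rmult_assoc, E, Rmult_1_l in Hm. lra.
Qed.

Lemma Series_nonneg (a : nat -> R) : (forall n, 0 <= a n) -> 0 <= Series a.
Proof.
  intros H. unfold Series.
  assert (Rbar_le (Lim_seq (fun _ => 0)) (Lim_seq (sum_n a))).
  { apply Lim_seq_le_loc. exists O. intros n _. rewrite sum_n_Reals.
    induction n; simpl. apply H. pose proof (H (S n)). lra. }
  rewrite Lim_seq_const in H0. destruct (Lim_seq (sum_n a)); simpl in *; lra.
Qed.

Lemma partial_le_series (a : nat -> R) K : (forall n, 0 <= a n) -> ex_series a ->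
  sum_f_R0 a K <= Series a.
Proof.
  intros H He. apply sum_incr; auto. apply is_series_Reals. apply Series_correct; auto.
Qed.

Lemma sum_shift (z : nat -> R) K : sum_f_R0 z K + z (S K) = z O + sum_f_R0 (fun k => z (S k)) K.
Proof. induction K; simpl. ring. lra. Qed.

Lemma sum_lin (z w : nat -> R) al be K :
  sum_f_R0 (fun k => al * z k + be * w k) K = al * sum_f_R0 z K + be * sum_f_R0 w K.
Proof. induction K; simpl. ring. rewrite IHK. ring. Qed.

Lemma sum_ge_first (z : nat -> R) K : (forall k, 0 <= z k) -> z O <= sum_f_R0 z K.
Proof. intros H; induction K; simpl. lra. pose proof (H (S K)); lra. Qed.

Lemma sum_nonneg (z : nat -> R) K : (forall k, 0 <= z k) -> 0 <= sum_f_R0 z K.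
Proof. intros H; induction K; simpl. apply H. pose proof (H (S K)); lra. Qed.

Lemma sol_facts lam p z0 Z : fluid_solution lam p z0 Z ->
  exists L, 0 <= L /\
    (forall i s1 s2, 0 <= s1 -> 0 <= s2 -> Rabs (Z s1 i - Z s2 i) <= L * Rabs (s1 - s2)) /\
    (forall s i, 0 <= s -> 0 <= Z s i /\ Z s i <= Z 0 O + L * s).
Proof.
  intros [HV [[L HL] [H1 [H2 H3]]]].
  exists (Rabs L). split. apply Rabs_pos. split.
  { intros i s1 s2 h1 h2. eapply Rle_trans. apply HL; auto.
    apply Rmult_le_compat_r. apply Rabs_pos. apply Rle_abs. }
  intros s i hs. split.
  - destruct (HV s hs) as [sig [[[hs0 hsS] _] Hsig]]. rewrite Hsig.
    apply Series_nonneg. intros j. destruct (i + j)%nat. lra. apply hsS.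
  - assert (Hm : forall i, Z s i <= Z s O).
    { induction i0. lra. destruct (H2 s hs) as [e Hi].
      destruct i0. lra. destruct (Hi i0) as [_ [_ h]]. lra. }
    eapply Rle_trans. apply Hm.
    specialize (HL O s 0 hs ltac:(lra)). rewrite Rminus_0_r, (Rabs_right s) in HL by lra.
    assert (L * s <= Rabs L * s) by (apply Rmult_le_compat_r; [lra| apply Rle_abs]).
    pose proof (Rle_abs (Z s O - Z 0 O)). lra.
Qed.

Lemma g_mono lam p (a b : nat -> R) i : 0 <= lam -> 0 <= p -> 0 <= a i -> 0 <= b i ->
  0 <= (a i - b i) * (g lam p a i - g lam p b i).
Proof.
  intros hl hp ha hb. unfold g.
  destruct (Rlt_dec 0 (a i)); destruct (Rlt_dec 0 (b i)).
  - nra.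
  - assert (b i = 0) by lra.
    assert ((if Rlt_dec 0 (b (Init.Nat.pred i)) then Rmin (lam * b (Init.Nat.pred i)) p else 0) <= p).
    { destruct (Rlt_dec 0 (b (Init.Nat.pred i))). apply Rmin_r. lra. }
    nra.
  - assert (a i = 0) by lra.
    assert ((if Rlt_dec 0 (a (Init.Nat.pred i)) then Rmin (lam * a (Init.Nat.pred i)) p else 0) <= p).
    { destruct (Rlt_dec 0 (a (Init.Nat.pred i))). apply Rmin_r. lra. }
    nra.
  - assert (a i = 0) by lra. assert (b i = 0) by lra. rewrite H, H0. lra.
Qed.

Lemma der_sum (F : nat -> R -> R) (F' : nat -> R) K t :
  (forall i, (i <= K)%nat -> is_derive (F i) t (F' i)) ->
  is_derive (fun s => sum_f_R0 (fun i => F i s) K) t (sum_f_R0 F' K).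
Proof.
  induction K; intros H; simpl. apply H; auto.
  apply (is_derive_plus (fun s => sum_f_R0 (fun i => F i s) K) (F (S K))).
  apply IHK; intros; apply H; lia. apply H; auto.
Qed.

Lemma half_pow_le1 j : 0 <= (/2)^j <= 1.
Proof. split. apply pow_le; lra. induction j. simpl; lra. simpl. pose proof (pow_le (/2) j ltac:(lra)). nra. Qed.

Lemma stab_partial lam p v0 u0 V U (t : R) :
  0 <= lam < 1 -> 0 <= p <= 1 ->
  fluid_solution lam p v0 V -> fluid_solution lam p u0 U -> 0 <= t ->
  exists B, forall K,
    sum_f_R0 (fun k => (/2)^(S k) * (U t (S k) - V t (S k))^2) K <=
    exp (4 * t) * (sum_f_R0 (fun k => (/2)^(S k) * (U 0 (S k) - V 0 (S k))^2) K + (/2)^(S K) * B^2 / 4)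
    /\ (forall s i, 0 <= s <= t -> Rabs (U s i - V s i) <= B).
Proof.
  intros hlam hp HsV HsU ht.
  destruct (sol_facts _ _ _ _ HsV) as [Lv [hLv [HLv HbV]]].
  destruct (sol_facts _ _ _ _ HsU) as [Lu [hLu [HLu HbU]]].
  destruct HsV as [_ [_ [_ [HV2 [Nv [HNv HVd]]]]]].
  destruct HsU as [_ [_ [_ [HU2 [Nu [HNu HUd]]]]]].
  set (B := (U 0 O + Lu * t) + (V 0 O + Lv * t)).
  set (x := fun i s => U s i - V s i).
  assert (Hx : forall s i, 0 <= s <= t -> Rabs (x i s) <= B).
  { intros s i hs. destruct (HbU s i ltac:(lra)). destruct (HbV s i ltac:(lra)).
    assert (Lu * s <= Lu * t) by (apply Rmult_le_compat_l; lra).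
    assert (Lv * s <= Lv * t) by (apply Rmult_le_compat_l; lra).
    unfold x, B. apply Rabs_le. lra. }
  assert (hB : 0 <= B) by (pose proof (Hx 0 O ltac:(lra)); pose proof (Rabs_pos (x O 0)); lra).
  exists B. intros K. split; [| exact Hx].
  set (y := fun j s => (/2)^j * (x j s)^2).
  assert (Hy0 : forall j s, 0 <= y j s).
  { intros. unfold y. pose proof (half_pow_le1 j). pose proof (pow2_ge_0 (x j s)). nra. }
  assert (HyB : forall j s, 0 <= s <= t -> y j s <= (/2)^j * B^2).
  { intros j s hs. unfold y. pose proof (half_pow_le1 j). apply Rmult_le_compat_l. lra.
    pose proof (Hx s j hs). pose proof (Rabs_pos (x j s)).
    rewrite <- (pow2_abs (x j s)). simpl. nra. }
  set (G := fun s => sum_f_R0 (fun k => y (S k) s) K).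
  change (G t <= exp (4 * t) * (G 0 + (/2)^(S K) * B^2 / 4)).
  assert (hL : 0 <= Lu + Lv) by lra.
  apply gronwall with (Lf := INR (S K) * (2 * B * (Lu + Lv))) (B := INR (S K) * B^2)
                      (N := fun s => Nv s \/ Nu s); auto; try lra.
  - apply Rmult_le_pos; [apply half_pow_le1 | apply pow2_ge_0].
  - apply Rmult_le_pos; [apply pos_INR | nra].
  - intros s r hs hr.
    assert (Ht : forall j, Rabs (y j s - y j r) <= 2 * B * (Lu + Lv) * Rabs (s - r)).
    { intros j. unfold y.
      replace ((/2)^j * x j s ^ 2 - (/2)^j * x j r ^ 2) with ((/2)^j * ((x j s - x j r) * (x j s + x j r))) by ring.
      rewrite !Rabs_mult. pose proof (half_pow_le1 j). rewrite (Rabs_right ((/2)^j)) by lra.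
      assert (H1 : Rabs (x j s - x j r) <= (Lu + Lv) * Rabs (s - r)).
      { unfold x. replace (U s j - V s j - (U r j - V r j)) with ((U s j - U r j) - (V s j - V r j)) by ring.
        pose proof (Rabs_triang (U s j - U r j) (-(V s j - V r j))) as T0. rewrite Rabs_Ropp in T0.
        replace (U s j - U r j + - (V s j - V r j)) with (U s j - U r j - (V s j - V r j)) in T0 by ring.
        pose proof (HLu j s r ltac:(lra) ltac:(lra)). pose proof (HLv j s r ltac:(lra) ltac:(lra)). lra. }
      assert (H2 : Rabs (x j s + x j r) <= 2 * B).
      { eapply Rle_trans. apply Rabs_triang. pose proof (Hx s j hs). pose proof (Hx r j hr). lra. }
      pose proof (Rabs_pos (x j s - x j r)). pose proof (Rabs_pos (x j s + x j r)). pose proof (Rabs_pos (s - r)).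
      apply Rle_trans with (1 * ((Lu + Lv) * Rabs (s - r) * (2 * B))).
      apply Rmult_le_compat; try lra. apply Rmult_le_pos; auto. apply Rmult_le_compat; auto.
      lra. }
    unfold G. clear -Ht. induction K.
    + simpl. specialize (Ht 1%nat). lra.
    + simpl sum_f_R0. rewrite S_INR.
      replace (sum_f_R0 (fun k : nat => y (S k) s) K + y (S (S K)) s -
              (sum_f_R0 (fun k : nat => y (S k) r) K + y (S (S K)) r))
        with ((sum_f_R0 (fun k : nat => y (S k) s) K - sum_f_R0 (fun k : nat => y (S k) r) K)
              + (y (S (S K)) s - y (S (S K)) r)) by ring.
      eapply Rle_trans. apply Rabs_triang. specialize (Ht (S (S K))). simpl in IHK |- *. lra.
  - intros s hs. unfold G. rewrite Rabs_right by (apply Rle_ge, sum_nonneg; intros; apply Hy0).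
    clear -HyB hs. induction K.
    + simpl. pose proof (HyB 1%nat s hs). pose proof (half_pow_le1 1). pose proof (pow2_ge_0 B). nra.
    + simpl sum_f_R0. rewrite S_INR. pose proof (HyB (S (S K)) s hs). pose proof (half_pow_le1 (S (S K))).
      pose proof (pow2_ge_0 B). simpl in IHK |- *. nra.
  - apply null_union; auto.
  - intros s hs hN.
    assert (hNv : ~ Nv s) by tauto. assert (hNu : ~ Nu s) by tauto.
    set (dV := fun i => lam * (V s (pred i) - V s i) - (1 - p) * (V s i - V s (S i)) - g lam p (V s) i).
    set (dU := fun i => lam * (U s (pred i) - U s i) - (1 - p) * (U s i - U s (S i)) - g lam p (U s) i).
    exists (sum_f_R0 (fun k => (/2)^(S k) * (2 * x (S k) s * (dU (S k) - dV (S k)))) K). split.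
    + unfold G, y. apply der_sum. intros i _.
      assert (Hxd : is_derive (fun s0 => x (S i) s0) s (dU (S i) - dV (S i))).
      { unfold x. apply der_val with (minus (dU (S i)) (dV (S i))); [|reflexivity].
        apply (is_derive_minus (fun s0 => U s0 (S i)) (fun s0 => V s0 (S i))).
        apply HUd; [lra | assumption | lia]. apply HVd; [lra | assumption | lia]. }
      pose proof (is_derive_pow _ 2 _ _ Hxd) as Hp.
      pose proof (is_derive_scal _ _ ((/2)^(S i)) _ Hp) as Hq.
      apply der_val with (1 := Hq). simpl. ring.
    +
      assert (Hsol : forall k, (/2)^(S k) * (2 * x (S k) s * (dU (S k) - dV (S k))) <=
                      /2 * y k s + 2 * y (S (S k)) s).
      { intros k. unfold y, dU, dV, x. simpl pred.
        pose proof (g_mono lam p (U s) (V s) (S k) ltac:(lra) ltac:(lra)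
                     (proj1 (HbU s (S k) ltac:(lra))) (proj1 (HbV s (S k) ltac:(lra)))) as Hg.
        set (a0 := U s k - V s k) in *. set (a1 := U s (S k) - V s (S k)) in *.
        set (a2 := U s (S (S k)) - V s (S (S k))) in *.
        set (D := g lam p (U s) (S k) - g lam p (V s) (S k)) in *.
        assert (E : 2 * a1 * (lam * (U s k - U s (S k)) - (1 - p) * (U s (S k) - U s (S (S k))) - g lam p (U s) (S k) -
                (lam * (V s k - V s (S k)) - (1 - p) * (V s (S k) - V s (S (S k))) - g lam p (V s) (S k)))
                = 2 * a1 * (lam * (a0 - a1) - (1 - p) * (a1 - a2)) - 2 * a1 * D)
          by (unfold a0, a1, a2, D; ring).
        rewrite E.
        assert (2 * a1 * (lam * (a0 - a1) - (1 - p) * (a1 - a2)) <= a0^2 + a2^2).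
        { assert (0 <= lam * (a0 - a1)^2) by (apply Rmult_le_pos; [lra| apply pow2_ge_0]).
          assert (0 <= (1 - p) * (a1 - a2)^2) by (apply Rmult_le_pos; [lra| apply pow2_ge_0]).
          assert (0 <= (1 - lam) * a0^2) by (apply Rmult_le_pos; [lra| apply pow2_ge_0]).
          assert (0 <= p * a2^2) by (apply Rmult_le_pos; [lra| apply pow2_ge_0]).
          assert (0 <= (lam + (1 - p)) * a1^2) by (apply Rmult_le_pos; [lra| apply pow2_ge_0]).
          replace (2 * a1 * (lam * (a0 - a1) - (1 - p) * (a1 - a2))) with
            (a0^2 + a2^2 - (lam * (a0 - a1)^2 + (1 - p) * (a1 - a2)^2 + (1 - lam) * a0^2 + p * a2^2 + (lam + (1 - p)) * a1^2)) by ring.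
          lra. }

        pose proof (half_pow_le1 k).
        replace ((/2)^(S (S k))) with (/2 * /2 * (/2)^k) by (simpl; ring).
        replace ((/2)^(S k)) with (/2 * (/2)^k) by (simpl; ring).
        assert (0 <= /2 * (/2)^k * (2 * a1 * D)) by nra.
        nra. }
      eapply Rle_trans. apply sum_Rle. intros k _. apply Hsol.
      rewrite (sum_lin (fun k => y k s) (fun k => y (S (S k)) s)).
      pose proof (sum_shift (fun k => y k s) K) as S1. simpl in S1.
      pose proof (sum_shift (fun k => y (S k) s) K) as S2. simpl in S2.
      fold (G s) in S1, S2.
      assert (Y0 : y O s = 2 * y 1%nat s).
      { unfold y, x. destruct (HU2 s ltac:(lra)) as [e1 _]. destruct (HV2 s ltac:(lra)) as [e2 _].
        replace (U s O - V s O) with (U s 1%nat - V s 1%nat) by lra. simpl. field. }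
      assert (Y1 : y 1%nat s <= G s) by (unfold G; apply (sum_ge_first (fun k => y (S k) s)); intros; apply Hy0).
      pose proof (Hy0 (S K) s). pose proof (Hy0 1%nat s).
      pose proof (HyB (S (S K)) s ltac:(lra)).
      replace ((/2)^(S (S K))) with (/2 * (/2)^(S K)) in H1 by (simpl; ring).
      pose proof (half_pow_le1 (S K)). pose proof (pow2_ge_0 B).
      nra.
Qed.

Lemma ex_series_bnd (a : nat -> R) B : (forall i, Rabs (a i) <= B^2 * (/2)^i) -> ex_series a.
Proof.
  intros H. apply (@ex_series_le R_AbsRing R_CompleteNormedModule a (fun i => B^2 * (/2)^i)). exact H.
  apply (ex_series_scal_l (B^2) (fun i => (/2)^i)). apply ex_series_geom.
  rewrite Rabs_right; lra.
Qed.

Lemma stab_series lam p v0 u0 V U (t : R) :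
  0 <= lam < 1 -> 0 <= p <= 1 ->
  fluid_solution lam p v0 V -> fluid_solution lam p u0 U -> 0 <= t ->
  Series (fun i => (/2)^i * (U t i - V t i)^2) <=
  3 * exp (4 * t) * Series (fun i => (/2)^i * (U 0 i - V 0 i)^2).
Proof.
  intros hl hp HV HU ht.
  destruct (stab_partial lam p v0 u0 V U t hl hp HV HU ht) as [B HB].
  set (a := fun i => (/2)^i * (U t i - V t i)^2).
  set (b := fun i => (/2)^i * (U 0 i - V 0 i)^2).
  assert (Ha0 : forall i, 0 <= a i).
  { intros; unfold a. apply Rmult_le_pos. apply half_pow_le1. apply pow2_ge_0. }
  assert (Hb0 : forall i, 0 <= b i).
  { intros; unfold b. apply Rmult_le_pos. apply half_pow_le1. apply pow2_ge_0. }
  assert (Bnd : forall s, 0 <= s <= t -> forall i, Rabs ((/2)^i * (U s i - V s i)^2) <= B^2 * (/2)^i).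
  { intros s hs i. destruct (HB O) as [_ Hx]. specialize (Hx s i hs).
    pose proof (half_pow_le1 i). rewrite Rabs_mult, Rabs_right by lra.
    rewrite <- (pow2_abs (U s i - V s i)), Rabs_right by (apply Rle_ge, pow2_ge_0).
    pose proof (Rabs_pos (U s i - V s i)).
    rewrite Rmult_comm. apply Rmult_le_compat_r. lra. simpl. nra. }
  assert (Ea : ex_series a) by (apply ex_series_bnd with B; apply Bnd; lra).
  assert (Eb : ex_series b) by (apply ex_series_bnd with B; apply Bnd; lra).
  assert (E2 : a O = 2 * a 1%nat).
  { destruct HU as [_ [_ [_ [HU2 _]]]]. destruct HV as [_ [_ [_ [HV2 _]]]].
    destruct (HU2 t ht) as [e1 _]. destruct (HV2 t ht) as [e2 _]. unfold a.
    replace (U t O - V t O) with (U t 1%nat - V t 1%nat) by lra. simpl. field. }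
  assert (Hk : forall K, sum_f_R0 a (S K) <= 3 * exp (4 * t) * (Series b + (/2)^(S K) * B^2 / 4)).
  { intros K. destruct (HB K) as [HK _].
    pose proof (sum_shift a K) as S1. rewrite <- tech5 in S1.
    pose proof (sum_shift b K) as S2. rewrite <- tech5 in S2.
    pose proof (partial_le_series b (S K) Hb0 Eb).
    pose proof (sum_ge_first (fun k => a (S k)) K ltac:(intros; apply Ha0)).
    change (sum_f_R0 (fun k => a (S k)) K <= exp (4*t) * (sum_f_R0 (fun k => b (S k)) K + (/2)^(S K) * B^2/4)) in HK.
    cbv beta in H0. pose proof (Hb0 O). pose proof (exp_pos (4 * t)).
    assert (sum_f_R0 (fun k => b (S k)) K <= Series b) by lra.
    assert (exp (4 * t) * sum_f_R0 (fun k => b (S k)) K <= exp (4 * t) * Series b) by (apply Rmult_le_compat_l; lra).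
    lra. }
  assert (L1 : is_lim_seq (fun K => sum_f_R0 a (S K)) (Series a)).
  { apply (is_lim_seq_incr_1 (fun K => sum_f_R0 a K)).
    apply is_lim_seq_ext with (sum_n a). intros; apply sum_n_Reals.
    apply Series_correct; auto. }
  assert (L2 : is_lim_seq (fun K => 3 * exp (4 * t) * (Series b + (/2)^(S K) * B^2 / 4)) (3 * exp (4 * t) * Series b)).
  { apply is_lim_seq_ext with (fun K => 3 * exp (4 * t) * Series b + (3 * exp (4 * t) * (/2) * B^2 / 4) * (/2)^K).
    intros K. simpl. field.
    assert (Hl : is_lim_seq (fun K => 3 * exp (4 * t) * Series b + (3 * exp (4 * t) * (/2) * B^2 / 4) * (/2)^K)
                   (3 * exp (4 * t) * Series b + (3 * exp (4 * t) * (/2) * B^2 / 4) * 0)).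
    { apply is_lim_seq_plus'. apply is_lim_seq_const.
      apply (is_lim_seq_scal_l (fun K => (/2)^K) _ 0). apply is_lim_seq_geom. rewrite Rabs_right; lra. }
    rewrite Rmult_0_r, Rplus_0_r in Hl. exact Hl. }
  pose proof (is_lim_seq_le _ _ _ _ Hk L1 L2). simpl in H. exact H.
Qed.

Theorem corollary2 :
  forall (lam p : R), 0 <= lam < 1 -> 0 <= p <= 1 ->
  forall (v0 : nat -> R) (w : nat -> nat -> R)
         (V : R -> nat -> R) (W : nat -> R -> nat -> R),
    in_Vbar v0 ->
    (forall n, in_Vbar (w n)) ->
    fluid_solution lam p v0 V ->
    (forall n, fluid_solution lam p (w n) (W n)) ->
    is_lim_seq (fun n => wnorm (fun i => w n i - v0 i)) 0 ->
    forall t : R, 0 <= t ->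
      is_lim_seq (fun n => wnorm (fun i => W n t i - V t i)) 0.
Proof.
  intros lam p hl hp v0 w V W Hv0 Hw HV HW Hlim t ht.
  set (c := sqrt (3 * exp (4 * t))).
  apply is_lim_seq_le_le with (u := fun _ => 0) (w := fun n => c * wnorm (fun i => w n i - v0 i)).
  - intros n. split. apply sqrt_pos. unfold wnorm.
    pose proof (stab_series lam p v0 (w n) V (W n) t hl hp HV (HW n) ht) as H.
    rewrite (Series_ext (fun i => (/2)^i * (W n 0 i - V 0 i)^2) (fun i => (/2)^i * (w n i - v0 i)^2)) in H.
    2:{ intros i. destruct HV as [_ [_ [H1 _]]]. destruct (HW n) as [_ [_ [H2 _]]]. rewrite H1, H2. reflexivity. }
    unfold c. pose proof (exp_pos (4 * t)).
    rewrite <- sqrt_mult_alt by lra. apply sqrt_le_1_alt. exact H.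
  - apply is_lim_seq_const.
  - pose proof (is_lim_seq_scal_l _ c _ Hlim) as H. simpl in H. rewrite Rmult_0_r in H. exact H.
Qed.
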